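(* Let $H:\mathbb{A}\to\mathbb{A}$ be a homeomorphism, $\Psi\subset\mathbb{A}$ a closed set with $H(\Psi)=\Psi$, $\tilde\Psi=q^{-1}(\Psi)$ and $\tilde H$ a lift of $H$ to $[0,1]\times\mathbb{R}$. If $H|_\Psi$ is uniformly rigid and $\tilde\Psi$ is connected, then there is a well defined rotation number $\alpha$ common to all points of $\Psi$: there is $\alpha\in\mathbb{R}$ with $\lim_{n\to\infty}\frac{\pi_2(\tilde H^n(y))-\pi_2(y)}{n}=\alpha$ for every $y\in\tilde\Psi$.
   Context: $\mathbb{A}=[0,1]\times\mathbb{R}/\mathbb{Z}$, $q:[0,1]\times\mathbb{R}\to\mathbb{A}$, $q(t,r)=(t,r+\mathbb{Z})$, is the universal covering, $\mathbb{A}$ carries the metric making $q$ a local isometry, a lift $\tilde H$ satisfies $q\circ\tilde H=H\circ q$, and $\pi_2(t,r)=r$. A homeomorphism $T:Y\to Y$ is uniformly rigid if $T^{n_i}\to\mathrm{id}_Y$ uniformly for some sequence $n_i\nearrow\infty$. *)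

(* Defs.v *)
From HB Require Import structures.
From mathcomp Require Import all_boot all_order all_algebra.
From mathcomp Require Import all_classical all_reals all_analysis.
Set Implicit Arguments. Unset Strict Implicit. Unset Printing Implicit Defensive.
Import Order.TTheory GRing.Theory Num.Theory.
Import numFieldNormedType.Exports.
Local Open Scope classical_set_scope.
Local Open Scope ring_scope.

Definition strip (R : realType) : set (R * R) :=
  [set p | 0 <= p.1 <= 1].

(* Points of the annulus A = [0,1] x R/Z are represented by their unique
   representative (t, r) with 0 <= t <= 1 and 0 <= r < 1. *)
Definition annulus (R : realType) : set (R * R) :=
  [set p | 0 <= p.1 <= 1 /\ 0 <= p.2 < 1].

(* The covering map q(t,r) = (t, r + Z), via representatives. *)
Definition qmap (R : realType) (p : R * R) : R * R :=
  (p.1, p.2 - (Num.floor p.2)%:~R).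

Definition distZ (R : realType) (x : R) : R :=
  Num.min (x - (Num.floor x)%:~R) ((Num.ceil x)%:~R - x).

(* The flat metric on A making q a local isometry. *)
Definition distA (R : realType) (a b : R * R) : R :=
  Num.sqrt ((a.1 - b.1) ^+ 2 + distZ (a.2 - b.2) ^+ 2).

Definition contA (R : realType) (f : R * R -> R * R) : Prop :=
  forall x, @annulus R x -> forall eps : R, 0 < eps ->
    exists2 delta : R, 0 < delta &
      forall y, @annulus R y -> distA x y < delta -> distA (f x) (f y) < eps.

Definition homeoA (R : realType) (H : R * R -> R * R) : Prop :=
  (forall x, @annulus R x -> @annulus R (H x)) /\ contA H /\
  exists G : R * R -> R * R,
    [/\ forall x, @annulus R x -> @annulus R (G x),
        forall x, @annulus R x -> G (H x) = x,
        forall y, @annulus R y -> H (G y) = y & contA G].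

Definition closedA (R : realType) (Psi : set (R * R)) : Prop :=
  Psi `<=` @annulus R /\
  forall x, @annulus R x ->
    (forall eps : R, 0 < eps -> exists2 y, Psi y & distA x y < eps) -> Psi x.

Definition is_lift (R : realType) (H Ht : R * R -> R * R) : Prop :=
  [/\ forall p, @strip R p -> @strip R (Ht p),
      {within @strip R, continuous Ht} &
      forall p, @strip R p -> qmap (Ht p) = H (qmap p)].

Definition unif_rigid_on (R : realType) (H : R * R -> R * R)
    (Psi : set (R * R)) : Prop :=
  exists n_ : nat -> nat, {homo n_ : i j / (i < j)%N} /\
    forall eps : R, 0 < eps -> exists N : nat, forall i : nat, (N <= i)%N ->
      forall x, Psi x -> distA (iter (n_ i) H x) x < eps.

(* Main.v *)
Require Import Defs.
From HB Require Import structures.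
From mathcomp Require Import all_boot all_order all_algebra.
From mathcomp Require Import all_classical all_reals all_analysis.
From mathcomp Require Import ring lra.
Import Order.TTheory GRing.Theory Num.Theory.
Import numFieldNormedType.Exports.
Local Open Scope classical_set_scope.
Local Open Scope ring_scope.
Lemma within_comp_cont {T U V : topologicalType} (A : set T) (B : set U)
  (f : T -> U) (g : U -> V) :
  (forall x, A x -> B (f x)) -> {within A, continuous f} ->
  {within B, continuous g} -> {within A, continuous (g \o f)}.
Proof.
move=> AB /subspace_continuousP hf /subspace_continuousP hg.
apply/subspace_continuousP => x Ax W hW.
have := hg (f x) (AB x Ax) W hW.
move=> h2; have := hf x Ax _ h2.
rewrite /= /within /= !nbhs_simpl /=. apply: filterS => z Wz Az.
by apply: Wz => //; apply: AB.
Qed.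

Lemma iter_cont {T : topologicalType} (A : set T) (f : T -> T) :
  (forall x, A x -> A (f x)) -> {within A, continuous f} ->
  forall n, {within A, continuous (iter n f)}.
Proof.
move=> Af cf; elim=> [|n IH].
  by apply: continuous_subspaceT => x.
have -> : iter n.+1 f = f \o iter n f by [].
apply: (@within_comp_cont _ _ _ A A) => //.
by move=> x Ax; elim: n {IH} => //= n IHn; apply: Af.
Qed.

Lemma snd_cont (R : realType) : continuous (@snd R R).
Proof. by move=> p; apply: cvg_snd. Qed.

Lemma D_cont (R : realType) (S : set (R * R)) (F : R * R -> R * R) :
  {within S, continuous F} ->
  {within S, continuous (fun y => (F y).2 - y.2)}.
Proof.
move=> cF.
have c1 : {within S, continuous (snd \o F)}.
  apply: (@within_comp_cont _ _ _ S setT) => //.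
  exact/continuous_subspaceT/snd_cont.
have c2 : {within S, continuous (@snd R R)}.
  exact/continuous_subspaceT/snd_cont.
move=> x; exact: (cvgB (c1 x) (c2 x)).
Qed.

Lemma half_int (R : realType) (k : int) : 1/2 <= `|k%:~R + 1/2 : R|.
Proof.
have [k0|k0] := lerP 0 k.
  have : (0 : R) <= k%:~R by rewrite ler0z.
  move=> h; rewrite ger0_norm; lra.
have : k <= -1 by rewrite -ltzD1 addrC subrr. 
move=> h; have : k%:~R <= (-1 : R) by rewrite -(ler_int R) in h.
move=> h2; rewrite ler0_norm; lra.
Qed.

Lemma const_int (R : realType) (S : set (R * R)) (D : R * R -> R) :
  connected S -> {within S, continuous D} ->
  (forall y, S y -> exists m : int, `|D y - m%:~R| < 1/4) ->
  forall y z (my mz : int), S y -> S z ->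
  `|D y - my%:~R| < 1/4 -> `|D z - mz%:~R| < 1/4 -> my = mz.
Proof.
move=> cS cD hm.
have iI : is_interval (D @` S).
  by apply/connected_intervalP; apply: connected_continuous_connected.
suff key : forall y z (my mz : int), S y -> S z ->
  `|D y - my%:~R| < 1/4 -> `|D z - mz%:~R| < 1/4 -> ~ (my < mz)%R.
  move=> y z my mz Sy Sz hy hz.
  have [lt|gt|//] := ltgtP my mz.
  - by exfalso; apply: (key y z my mz).
  - by exfalso; apply: (key z y mz my).
move=> y z my mz Sy Sz hy hz lt.
have le : (my + 1 <= mz)%R by rewrite lezD1.
have le' : my%:~R + 1 <= (mz%:~R : R) by rewrite -(ler_int R) intrD in le.
move: hy hz; rewrite !ltr_norml => /andP[hy1 hy2] /andP[hz1 hz2].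
have : (D @` S) (my%:~R + 1/2).
  apply: (iI (D y) (D z)); [by exists y|by exists z|].
  apply/andP; split; lra.
case=> w Sw Dw.
have [m hmw] := hm w Sw.
move: hmw; rewrite Dw.
have -> : my%:~R + 1 / 2 - m%:~R = (my - m)%:~R + 1/2 :> R by rewrite intrB; lra.
have := half_int R (my - m); lra.
Qed.

Lemma arith (R : realType) (Dk Dr c k r N n M d : R) :
  0 < N -> 0 <= r -> r < N -> 0 <= k -> n = k * N + r -> 0 < n -> 0 < d ->
  `|Dk - k * c| <= k / 4 -> `|Dr| <= M -> 1 < 2 * d * N ->
  M + `|c| < d * n / 2 -> `|c / N - (Dk + Dr) / n| < d.
Proof.
move=> N0 r0 rN k0 en n0 d0 hk hr hN hM.
have e : c / N - (Dk + Dr) / n = - (((Dk - k * c) + Dr - c * (r / N)) / n).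
  have nz : n != 0 by rewrite gt_eqF.
  have Nz : N != 0 by rewrite gt_eqF.
  rewrite {1 2}en; field; rewrite -en; apply/andP; split => //.
rewrite e normrN normrM normfV (gtr0_norm n0).
rewrite ltr_pdivrMr //.
have h1 : `|c * (r / N)| <= `|c|.
  rewrite normrM (ger0_norm (divr_ge0 r0 (ltW N0))).
  have : r / N <= 1 by rewrite ler_pdivrMr //; lra.
  move=> h; have := normr_ge0 c; nra.
have h2 : k / 4 < d * n / 2.
  have : k * 1 <= k * (2 * d * N - 1) + k by nra.
  nra.
have h3 := ler_normD (Dk - k * c + Dr) (- (c * (r / N))).
rewrite normrN in h3.
have h4 := ler_normD (Dk - k * c) Dr.
apply: (le_lt_trans h3); lra.
Qed.

Lemma rot_core (R : realType) (T : Type) (S : set T) (f : T -> T) (h : T -> R) :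
  (forall y, S y -> S (f y)) ->
  (forall K : nat, exists N : nat, [/\ (K <= N)%N, (0 < N)%N &
     exists c : R, forall y, S y -> `|(h (iter N f y) - h y) - c| < 1/4]) ->
  forall d : R, 0 < d -> exists a : R, forall y, S y ->
    \forall n \near \oo, `|a - (h (iter n f y) - h y) / n%:R| < d.
Proof.
move=> Sf hK d d0.
have [N [KN N0 [c hc]]] := hK (Num.truncn (1 / d)).+1.
exists (c / N%:R) => y Sy.
pose Df n y := h (iter n f y) - h y.
have Sit : forall n y, S y -> S (iter n f y).
  by move=> n z Sz; elim: n => //= n IH; apply: Sf.
have add : forall a b z, Df (a + b)%N z = Df a (iter b f z) + Df b z.
  by move=> a b z; rewrite /Df iterD; ring.
have hkN : forall k z, S z -> `|Df (k * N)%N z - k%:R * c| <= k%:R / 4.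
  elim=> [|k IH] z Sz.
    by rewrite mul0n /Df /= subrr mul0r subrr normr0 mul0r.
  rewrite mulSn add.
  have h1 := hc _ (Sit (k * N)%N z Sz).
  have h2 := IH z Sz.
  have e : Df N (iter (k * N) f z) + Df (k * N)%N z - k.+1%:R * c =
     (Df N (iter (k * N) f z) - c) + (Df (k * N)%N z - k%:R * c).
    by rewrite -addn1 natrD; ring.
  rewrite e; apply: (le_trans (ler_normD _ _)).
  rewrite -addn1 natrD; rewrite /Df in h2 *; lra.
pose M := \sum_(i < N) `|Df i y|.
have hM : forall r, (r < N)%N -> `|Df r y| <= M.
  move=> r rN; rewrite /M (bigD1 (Ordinal rN)) //= lerDl.
  by apply: sumr_ge0 => i _; apply: normr_ge0.
have N0R : (0 : R) < N%:R by rewrite ltr0n.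
have hN : 1 < 2 * d * N%:R.
  have := truncnS_gt (1 / d).
  have : ((Num.truncn (1 / d)).+1%:R <= N%:R :> R) by rewrite ler_nat.
  move=> h1 h2; have : 1 / d < N%:R by apply: (lt_le_trans h2 h1).
  rewrite ltr_pdivrMr // => h3; nra.
have hn0 := truncnS_gt (2 * (M + `|c|) / d).
exists (maxn 1 (Num.truncn (2 * (M + `|c|) / d)).+1) => // n /= hn.
have n1 : (1 <= n)%N by apply: leq_trans hn; apply: leq_maxl.
have n2 : ((Num.truncn (2 * (M + `|c|) / d)).+1 <= n)%N.
  by apply: leq_trans hn; apply: leq_maxr.
have en := divn_eq n N.
have rN : (n %% N < N)%N by apply: ltn_pmod.
have eD : h (iter n f y) - h y =
   Df (n %/ N * N)%N (iter (n %% N) f y) + Df (n %% N)%N y by rewrite -add -en.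
rewrite eD.
apply: (@arith R (Df (n %/ N * N)%N (iter (n %% N) f y)) (Df (n %% N)%N y) c (n %/ N)%:R (n %% N)%:R N%:R n%:R M d).
- exact: N0R.
- exact: ler0n.
- by rewrite ltr_nat.
- exact: ler0n.
- by rewrite {1}en natrD natrM.
- by rewrite ltr0n.
- exact: d0.
- exact: hkN (Sit _ _ Sy).
- exact: hM.
- exact: hN.
- have : (Num.truncn (2 * (M + `|c|) / d)).+1%:R <= (n%:R : R) by rewrite ler_nat.
  move=> h1; have : 2 * (M + `|c|) / d < n%:R by apply: (lt_le_trans hn0 h1).
  rewrite ltr_pdivrMr // => h2; nra.
Qed.

Lemma distZ_int (R : realType) (e : R) : distZ e < 1/4 ->
  exists m : int, `|e - m%:~R| < 1/4.
Proof.
rewrite /distZ; have hf := real_floor_le (num_real e).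
have hc := real_ceil_ge (num_real e).
case: (leP (e - (Num.floor e)%:~R) ((Num.ceil e)%:~R - e)) => _ h.
  by exists (Num.floor e); rewrite ger0_norm // subr_ge0.
by exists (Num.ceil e); rewrite ler0_norm ?subr_le0 // opprB.
Qed.

Lemma distA_qmap (R : realType) (a y : R * R) : distA (qmap a) (qmap y) < 1/4 ->
  exists m : int, `|a.2 - y.2 - m%:~R| < 1/4.
Proof.
rewrite /distA /qmap /= => h.
have h1 : distZ (a.2 - (Num.floor a.2)%:~R - (y.2 - (Num.floor y.2)%:~R)) < 1/4.
  apply: le_lt_trans h.
  set v := distZ _.
  have v0 : 0 <= v.
    rewrite /v; move: (_ - _) => e; rewrite /distZ.
    have hf := real_floor_le (num_real e).
    have hc := real_ceil_ge (num_real e).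
    by rewrite le_min !subr_ge0 hf hc.
  rewrite -[X in X <= _](ger0_norm v0) -sqrtr_sqr.
  by apply: ler_wsqrtr; rewrite lerDr sqr_ge0.
have [m hm] := @distZ_int R _ h1.
exists (m + Num.floor a.2 - Num.floor y.2).
by rewrite !intrD intrN; move: hm; congr (_ < _); congr (`|_|); ring.
Qed.

Theorem corollary2p5 (R : realType) (H Ht : R * R -> R * R)
    (Psi : set (R * R)) :
  homeoA H -> closedA Psi ->
  (forall x, Psi x -> Psi (H x)) ->
  (forall y, Psi y -> exists2 x, Psi x & H x = y) ->
  is_lift H Ht ->
  unif_rigid_on H Psi ->
  connected [set p | @strip R p /\ Psi (qmap p)] ->
  exists alpha : R, forall y, @strip R y -> Psi (qmap y) ->
    (fun n : nat => ((iter n Ht y).2 - y.2) / n%:R) @ \oo --> alpha.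
Proof.
move=> _ _ PsiH _ [Hs Hc Hq] [n_ [hn hr]] cS.
set S := [set p | @strip R p /\ Psi (qmap p)] in cS *.
have stit : forall n y, strip y -> strip (iter n Ht y).
  by move=> n y sy; elim: n => //= n IH; apply: Hs.
have Sf : forall y, S y -> S (Ht y).
  by move=> y [sy py]; split; [exact: Hs | rewrite Hq //; exact: PsiH].
have qit : forall n y, strip y -> qmap (iter n Ht y) = iter n H (qmap y).
  by elim => //= n IH y sy; rewrite Hq; [rewrite IH | apply: stit].
have nge : forall i, (i <= n_ i)%N.
  elim=> // i IH; exact: leq_ltn_trans IH (hn _ _ (ltnSn i)).
have cont : forall N, {within S, continuous (fun y => (iter N Ht y).2 - y.2)}.
  move=> N; apply: D_cont.
  apply: (@continuous_subspaceW _ _ S (@strip R)); first by move=> y [].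
  exact: iter_cont.
have hK : forall K : nat, exists N : nat, [/\ (K <= N)%N, (0 < N)%N &
     exists c : R, forall y, S y -> `|((iter N Ht y).2 - y.2) - c| < 1/4].
  move=> K.
  have [N0 hN0] := hr (1/4) ltac:(lra).
  pose i := maxn N0 K.+1.
  have Ki : (K < i)%N by apply: leq_maxr.
  exists (n_ i); split.
  - exact: leq_trans (ltnW Ki) (nge i).
  - exact: leq_trans (leq_ltn_trans (leq0n K) Ki) (nge i).
  have hm : forall y, S y -> exists m : int,
      `|((iter (n_ i) Ht y).2 - y.2) - m%:~R| < 1/4.
    move=> y [sy py]; apply: distA_qmap; rewrite qit //.
    by apply: hN0 => //; apply: leq_maxl.
  case: (pselect (exists y0, S y0)) => [[y0 Sy0]|no].
    have [m0 hm0] := hm y0 Sy0.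
    exists m0%:~R => y Sy; have [my hmy] := hm y Sy.
    by rewrite -(@const_int R S _ cS (cont _) hm y y0 my m0 Sy Sy0 hmy hm0).
  by exists 0 => y Sy; exfalso; apply: no; exists y.
have core := @rot_core R _ S Ht snd Sf hK.
case: (pselect (exists y0, S y0)) => [[y0 Sy0]|no]; last first.
  by exists 0 => y sy py; exfalso; apply: no; exists y.
pose u y := fun n : nat => ((iter n Ht y).2 - y.2) / n%:R.
have cv : cvg (u y0 @ \oo).
  apply/cauchy_cvgP; apply: cauchy_exP => e e0.
  have [a ha] := core e e0; exists a.
  exact: ha y0 Sy0.
exists (lim (u y0 @ \oo)) => y sy py.
apply/cvgrPdist_lt => e e0.
have e3 : 0 < e / 3 by lra.
have [a ha] := core _ e3.
have h1 := ha y0 Sy0.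
have h2 := ha y (conj sy py).
have h3 := (cvgrPdist_lt _ _).1 cv _ e3.
near=> n.
have g1 : `|a - u y0 n| < e / 3 by near: n.
have g2 : `|a - u y n| < e / 3 by near: n.
have g3 : `|lim (u y0 @ \oo) - u y0 n| < e / 3.
  near: n; apply: h3.
have t1 := ler_normD (lim (u y0 @ \oo) - u y0 n) (u y0 n - u y n).
have t2 := ler_normD (u y0 n - a) (a - u y n).
rewrite distrC in g1.
have e1 : lim (u y0 @ \oo) - u y0 n + (u y0 n - u y n) = lim (u y0 @ \oo) - u y n by ring.
have e2 : u y0 n - a + (a - u y n) = u y0 n - u y n by ring.
rewrite e1 in t1; rewrite e2 in t2.
rewrite /u in g1 g2 g3 t1 t2 *; lra.
Unshelve. all: end_near.
Qed.
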